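(* Let $A=(a_{ij})$ be a real $n\times n$ matrix with nonnegative entries, $\mathbf 1=(1,\ldots,1)^{\mathrm T}$, $L=\operatorname{diag}(A\mathbf 1)-A$, $P=I-\tau L$ with $0<\tau\le\bigl(\max_i\sum_{j\neq i}a_{ij}\bigr)^{-1}$, and let $S$ be the orthogonal projection of $\mathbb R^n$ onto $\mathcal R(L)\oplus\operatorname{span}(\mathbf 1)$. Then $(PS)^k=P^kS$ for every $k=1,2,\ldots$.
   Context: $\mathcal R(L)$ denotes the range of $L$; $I$ is the identity matrix. *)

(* Defs.v *)
From HB Require Import structures.
From mathcomp Require Import all_boot all_order all_algebra.
Set Implicit Arguments. Unset Strict Implicit. Unset Printing Implicit Defensive.
Import Order.TTheory GRing.Theory Num.Theory.
Local Open Scope ring_scope.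

Definition ones (R : realFieldType) (n : nat) : 'cV[R]_n := const_mx 1.

Definition laplacian (R : realFieldType) (n : nat) (A : 'M[R]_n) : 'M[R]_n :=
  diag_mx (A *m ones R n)^T - A.

(* max_i sum_{j <> i} a_ij  (entries are nonnegative, so folding max from 0 is harmless) *)
Definition max_offdiag_rowsum (R : realFieldType) (n : nat) (A : 'M[R]_n) : R :=
  \big[Num.max/0]_(i < n) \sum_(j < n | j != i) A i j.

(* The subspace R(L) + span(1), represented (mxalgebra convention) as the row
   space of a matrix whose rows are transposes of vectors in the subspace:
   column space of L = row space of L^T. *)
Definition range_plus_ones (R : realFieldType) (n : nat) (L : 'M[R]_n) :=
  (L^T + (ones R n)^T)%MS.

Definition is_orth_proj (R : realFieldType) (n m : nat) (S : 'M[R]_n) (W : 'M[R]_(m, n)) :=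
  forall x : 'cV[R]_n,
    ((S *m x)^T <= W)%MS /\
    (forall w : 'rV[R]_n, (w <= W)%MS -> w *m (x - S *m x) = 0).

(* Main.v *)
Require Import Defs.
From HB Require Import structures.
From mathcomp Require Import all_boot all_order all_algebra.
Import Order.TTheory GRing.Theory Num.Theory.
Local Open Scope ring_scope.

Lemma subB_sub (R : realFieldType) m1 m2 n (A B : 'M[R]_(m1, n)) (C : 'M[R]_(m2, n)) :
  (A <= C)%MS -> (B <= C)%MS -> ((A - B)%R <= C)%MS.
Proof.
move=> hA hB; apply: addmx_sub => //; rewrite -scaleN1r; exact: scalemx_sub.
Qed.

Lemma self_orth0 (R : realFieldType) n (v : 'cV[R]_n) : v^T *m v = 0 -> v = 0.
Proof.
move=> h; apply/colP => i; rewrite mxE.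
have := congr1 (fun M : 'M[R]_1 => M 0 0) h; rewrite !mxE.
under eq_bigr do rewrite mxE.
move/psumr_eq0P => H.
have : v i 0 * v i 0 = 0 by apply: H => // j _; rewrite -expr2 sqr_ge0.
by move/eqP; rewrite mulf_eq0 orbb => /eqP.
Qed.

Lemma fixS (R : realFieldType) n m (S : 'M[R]_n) (W : 'M[R]_(m, n)) :
  is_orth_proj S W -> forall z : 'cV[R]_n, (z^T <= W)%MS -> S *m z = z.
Proof.
move=> HS z hz.
have dW : ((z - S *m z)^T <= W)%MS.
  by rewrite linearB /=; apply: subB_sub => //; case: (HS z).
have := (HS z).2 _ dW => /self_orth0 /eqP; rewrite subr_eq0 => /eqP <-.
by [].
Qed.

Theorem lemmaA1 (R : realFieldType) (n : nat) (A : 'M[R]_n) (tau : R)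
  (S : 'M[R]_n) :
  (forall i j, 0 <= A i j) ->
  0 < tau ->
  tau * max_offdiag_rowsum A <= 1 ->
  is_orth_proj S (range_plus_ones (laplacian A)) ->
  let P := 1%:M - tau *: laplacian A in
  forall k : nat, (0 < k)%N -> (P *m S) ^+ k = P ^+ k *m S.
Proof.
move=> _ _ _ HS P.
set L := laplacian A.
have inW : forall y : 'cV[R]_n, (y^T <= range_plus_ones L)%MS ->
    ((P *m y)^T <= range_plus_ones L)%MS.
  move=> y hy; rewrite /P mulmxBl mul1mx -scalemxAl linearB /= linearZ /=.
  apply: subB_sub => //; apply: scalemx_sub.
  rewrite trmx_mul; apply: submx_trans (submxMl _ _) _.
  exact: addsmxSl.
have SPS : S *m (P *m S) = P *m S.
  apply/matrixP => i j.
  have := @fixS _ _ _ _ _ HS _ (inW _ ((HS (delta_mx j 0)).1)).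
  move/(congr1 (fun M : 'cV[R]_n => M i 0)).
  by rewrite !mulmxA -!colE !mxE.
case=> // k _; elim: k => [|k IH]; first by rewrite !expr1.
rewrite exprSr IH [P ^+ k.+2]exprSr.
change (P ^+ k.+1 *m S *m (P *m S) = P ^+ k.+1 *m P *m S).
by rewrite -mulmxA SPS mulmxA.
Qed.
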